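(* Let $D\ge2$ be fixed and $\lambda>0$. Let $\Gamma$ be a complete $D$-ary tree of depth $h\ge\bar h$ such that $K=o(n)$. Then for a realization $G$ of the graph under $\mathbb{P}_1$, the overlap of any estimator $\hat{\mathcal K}$ of the planted set satisfies $\mathrm{ov}(\hat{\mathcal K})\le(1-\delta)K$ for some $\delta>0$.
   Context: Model: $\mathbb{P}_1$: $G=G_0\cup G'$ with $G_0\sim\mathcal G(n,\lambda/n)$ and $G'$ the image of $\Gamma$ under an injection $\sigma$ of its vertex set into $[n]$ chosen uniformly at random independently of $G_0$; $\mathcal K$ is the image of $\sigma$. An estimator is a set $\hat{\mathcal K}$ of $K$ nodes computed from $G$; $\mathrm{ov}(\hat{\mathcal K})=\sum_{i\in[n]}\mathbb{P}_1(i\in\hat{\mathcal K}\cap\mathcal K)$. A complete $D$-ary tree of depth $h$ has root at depth $0$, each vertex at depth $<h$ has $D$ children, and $K=(D^{h+1}-1)/(D-1)$ vertices. $p_h$ is the probability that a Galton–Watson tree with offspring law $\mathrm{Poi}(\lambda)$ contains a complete $D$-ary tree of depth $h$ rooted at its root; $\bar h=\inf\{h>0:p_h<1/n\}$. *)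

(* Defs.v *)
From HB Require Import structures.
From mathcomp Require Import all_boot all_order all_algebra.
From mathcomp Require Import all_classical all_reals all_analysis.
Set Implicit Arguments. Unset Strict Implicit. Unset Printing Implicit Defensive.
Import Order.TTheory GRing.Theory Num.Theory.
Local Open Scope ring_scope.

Definition poisson_pmf (R : realType) (lam : R) (k : nat) : R :=
  expR (- lam) * lam ^+ k / (k`!)%:R.

Definition binom_tail (R : realType) (k : nat) (q : R) (D : nat) : R :=
  \sum_(D <= j < k.+1) ('C(k, j))%:R * q ^+ j * (1 - q) ^+ (k - j).

(* p_h = probability that a Galton-Watson tree with Poi(lam) offspring
   contains a complete D-ary tree of depth h rooted at its root.  Depth h+1: the root has
   k ~ Poi(lam) children whose subtrees are i.i.d. GW trees, and we need
   at least D of them to contain a complete D-ary tree of depth h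
   rooted at that child. *)
Fixpoint ptree (R : realType) (lam : R) (D : nat) (h : nat) : R :=
  match h with
  | 0 => 1
  | h'.+1 => limn (fun N : nat => \sum_(0 <= k < N) (poisson_pmf lam k * binom_tail k (ptree lam D h') D))
  end.

(* Number of vertices of a complete D-ary tree of depth h *)
Definition Ksize (D h : nat) : nat := ((D ^ h.+1 - 1) %/ (D - 1))%N.

(* A simple graph on 'I_n is represented by its edge set: a set of pairs
   (i, j) with i < j. *)
Definition pairs (n : nat) : {set 'I_n * 'I_n} := [set e : 'I_n * 'I_n | (e.1 < e.2)%N].

Definition upair (n : nat) (x y : 'I_n) : 'I_n * 'I_n :=
  if (x < y)%N then (x, y) else (y, x).

Definition er_prob (R : realType) (n : nat) (p : R) (E : {set 'I_n * 'I_n}) : R :=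
  if E \subset pairs n then
    \prod_(e in pairs n) (if e \in E then p else 1 - p)
  else 0.

(* Complete D-ary tree on vertex set 'I_K (BFS labelling): vertex a > 0
   has parent (a - 1) / D. With K = Ksize D h this is the complete D-ary
   tree of depth h rooted at 0. *)
Definition tree_edge (D K : nat) (a b : 'I_K) : bool :=
  (0 < a)%N && (nat_of_ord b == (a.-1 %/ D))%N.

Definition injs (n K : nat) : {set {ffun 'I_K -> 'I_n}} :=
  [set s : {ffun 'I_K -> 'I_n} | injectiveb s].

Definition planted_edges (n D K : nat) (s : {ffun 'I_K -> 'I_n}) :
  {set 'I_n * 'I_n} :=
  [set upair (s ab.1) (s ab.2) | ab in [set ab : 'I_K * 'I_K | tree_edge D ab.1 ab.2]].

Definition planted_set (n K : nat) (s : {ffun 'I_K -> 'I_n}) : {set 'I_n} :=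
  s @: [set: 'I_K].

(* ov(Khat) = sum_i P_1(i in Khat(G) /\ i in K) = E_1 |Khat(G) cap K|,
   where G = G0 cup sigma(Gamma), G0 ~ G(n, lam/n), sigma uniform injection
   independent of G0. *)
Definition overlap (R : realType) (n D K : nat) (lam : R)
  (f : {set 'I_n * 'I_n} -> {set 'I_n}) : R :=
  \sum_(E : {set 'I_n * 'I_n}) \sum_(s in injs n K)
     (er_prob (lam / n%:R) E / (#|injs n K|)%:R)
       * (#|f (E :|: planted_edges D s) :&: planted_set s|)%:R.

(* Main.v *)
Require Import Defs.
From HB Require Import structures.
From mathcomp Require Import all_boot all_order all_algebra.
From mathcomp Require Import all_classical all_reals all_analysis.
From mathcomp Require Import fingroup perm.
From mathcomp Require Import ring lra zify.
Import Order.TTheory GRing.Theory Num.Theory.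
Local Open Scope ring_scope.
Set Implicit Arguments. Unset Strict Implicit. Unset Printing Implicit Defensive.
Definition touches (n : nat) (a : 'I_n) (e : 'I_n * 'I_n) : bool :=
  (e.1 == a) || (e.2 == a).

Definition tp (n : nat) (t : {perm 'I_n}) (e : 'I_n * 'I_n) : 'I_n * 'I_n :=
  upair (t e.1) (t e.2).

Lemma upairC (n : nat) (a b : 'I_n) : upair a b = upair b a.
Proof.
by rewrite /upair; case: (ltngtP a b) => [ab|ab|/val_inj->].
Qed.

Lemma in_pairs (n : nat) (e : 'I_n * 'I_n) : (e \in pairs n) = (e.1 < e.2)%N.
Proof. by rewrite inE. Qed.

Lemma upair_pairs (n : nat) (a b : 'I_n) : a != b -> upair a b \in pairs n.
Proof.
move=> ab; rewrite in_pairs /upair; case: (ltngtP a b) => //= h.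
by move: ab; rewrite (val_inj h) eqxx.
Qed.

Lemma upairE (n : nat) (e : 'I_n * 'I_n) : e \in pairs n -> upair e.1 e.2 = e.
Proof. by rewrite in_pairs /upair => ->; case: e. Qed.

Lemma touches_upair (n : nat) (x a b : 'I_n) :
  touches x (upair a b) = (a == x) || (b == x).
Proof. by rewrite /touches /upair; case: ifP => //= _; rewrite orbC. Qed.

Lemma upair_inj (n : nat) (p a b : 'I_n) : upair p a = upair p b -> a = b.
Proof.
by rewrite /upair; case: ifP; case: ifP => ? ? [] => *; congruence.
Qed.

Lemma pairs_neq (n : nat) (e : 'I_n * 'I_n) : e \in pairs n -> e.1 != e.2.
Proof. by rewrite in_pairs => h; apply/eqP => e12; rewrite e12 ltnn in h. Qed.

Lemma tp_upair (n : nat) (t : {perm 'I_n}) (a b : 'I_n) :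
  tp t (upair a b) = upair (t a) (t b).
Proof. rewrite /tp [upair a b]/upair; case: ifP => //= _; exact: upairC. Qed.

Lemma tp_pairs (n : nat) (t : {perm 'I_n}) (e : 'I_n * 'I_n) :
  e \in pairs n -> tp t e \in pairs n.
Proof.
move=> /pairs_neq h; apply: upair_pairs.
by apply: contra h => /eqP /perm_inj ->.
Qed.

Lemma tpK (n : nat) (x y : 'I_n) (e : 'I_n * 'I_n) :
  e \in pairs n -> tp (tperm x y) (tp (tperm x y) e) = e.
Proof. by move=> ep; rewrite {2}/tp tp_upair !tpermK upairE. Qed.

Lemma tp_inj (n : nat) (x y : 'I_n) : {in pairs n &, injective (tp (tperm x y))}.
Proof. by move=> e1 e2 p1 p2 h; rewrite -(tpK x y p1) h tpK. Qed.

Lemma mem_tp (n : nat) (x y : 'I_n) (E : {set 'I_n * 'I_n}) e :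
  E \subset pairs n ->
  (e \in tp (tperm x y) @: E) = (e \in pairs n) && (tp (tperm x y) e \in E).
Proof.
move=> sE; apply/imsetP/andP => [[e' e'E ->]|[ep te]].
  have e'p := fintype.subsetP sE _ e'E.
  by rewrite tpK // e'E tp_pairs.
by exists (tp (tperm x y) e) => //; rewrite tpK.
Qed.

Lemma tp_subset (n : nat) (x y : 'I_n) (E : {set 'I_n * 'I_n}) :
  E \subset pairs n -> tp (tperm x y) @: E \subset pairs n.
Proof.
move=> sE; apply/fintype.subsetP => e; rewrite mem_tp // => /andP[] //.
Qed.

Lemma tp_pairsE (n : nat) (x y : 'I_n) : tp (tperm x y) @: pairs n = pairs n.
Proof.
apply/setP => e; rewrite mem_tp //; apply/andP/idP => [[]//|ep].
by rewrite ep tp_pairs.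
Qed.

Lemma tpp (n : nat) (x y : 'I_n) (E : {set 'I_n * 'I_n}) :
  E \subset pairs n -> tp (tperm x y) @: (tp (tperm x y) @: E) = E.
Proof.
move=> sE; apply/setP => e; rewrite mem_tp ?tp_subset // mem_tp //.
apply/andP/idP => [[ep /andP[_]]|eE]; first by rewrite tpK.
have ep := fintype.subsetP sE _ eE.
by rewrite ep tp_pairs // tpK // eE.
Qed.

Lemma er_tp (R : realType) (n : nat) (q : R) (x y : 'I_n) (E : {set 'I_n * 'I_n}) :
  E \subset pairs n -> er_prob q (tp (tperm x y) @: E) = er_prob q E.
Proof.
move=> sE; rewrite /er_prob tp_subset // sE.
rewrite -{1}(tp_pairsE x y) big_imset /=; last exact: tp_inj.
by apply: eq_bigr => e ep; rewrite mem_tp // tp_pairs // tpK.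
Qed.

Lemma prod_ind (R : realType) (n : nat) (J S T : {set 'I_n * 'I_n}) :
  T \subset S -> S \subset pairs n ->
  \prod_(e in pairs n) (if e \in S then (if (e \in J) == (e \in T) then 1 else 0) else 1)
  = (if J :&: S == T then 1 else 0 : R).
Proof.
move=> sTS sSp.
case: (boolP [exists e, (e \in J :&: S) != (e \in T)]) => [/existsP[e0 He0]|].
  have e0S : e0 \in S.
    apply: contraR He0 => e0S; rewrite inE (negbTE e0S) andbF.
    by apply/eqP/esym/negbTE; apply: contra e0S; apply: (fintype.subsetP sTS).
  have -> : (J :&: S == T) = false.
    by apply/negbTE; apply: contra He0 => /eqP ->.
  rewrite (bigD1 e0) /=; last exact: (fintype.subsetP sSp).
  by move: He0; rewrite inE e0S andbT => /negbTE ->; rewrite mul0r.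
rewrite negb_exists => /forallP H.
have -> : J :&: S == T.
  by apply/eqP/setP => e; apply/eqP; move: (H e); rewrite negbK.
apply: big1 => e _; case: ifP => // eS.
by move: (H e); rewrite negbK inE eS andbT => ->.
Qed.

Lemma er_event (R : realType) (n : nat) (q : R) (S T : {set 'I_n * 'I_n}) :
  T \subset S -> S \subset pairs n ->
  \sum_(E : {set 'I_n * 'I_n}) er_prob q E * (if E :&: S == T then 1 else 0)
  = \prod_(e : 'I_n * 'I_n) (if e \in S then (if e \in T then q else 1 - q) else 1).
Proof.
move=> sTS sSp.
pose H (e : 'I_n * 'I_n) (b : bool) : R :=
  if e \in pairs n then (if b then q else 1 - q) *
     (if e \in S then (if b == (e \in T) then 1 else 0) else 1)
  else (if b then 0 else 1).
transitivity (\sum_(E : {set 'I_n * 'I_n}) \prod_e H e (e \in E)).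
  apply: eq_bigr => J _.
  case sJ: (J \subset pairs n).
    rewrite /er_prob sJ -(prod_ind R J sTS sSp) -big_split /=.
    rewrite [LHS]big_mkcond /=; apply: eq_bigr => e _.
    rewrite /H; case: ifP => // ep.
    by case: ifP => // eJ; move: (fintype.subsetP sJ _ eJ); rewrite ep.
  rewrite /er_prob sJ mul0r.
  move/negbT: sJ => /fintype.subsetPn [e0 e0J e0p].
  by rewrite (bigD1 e0) //= /H (negbTE e0p) e0J mul0r.
transitivity (\prod_e (H e true + H e false)).
  rewrite bigA_distr; apply: eq_big => // J _; apply: eq_bigr => e _.
  by case: (e \in J).
apply: eq_bigr => e _; rewrite /H.
case: ifP => ep; last by rewrite add0r; case: ifP => // eS; move: (fintype.subsetP sSp _ eS); rewrite ep.
case: ifP => eS; last by rewrite !mulr1 subrKC.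
by case: (e \in T); rewrite /= ?mulr1 ?mulr0 ?addr0 ?add0r.
Qed.

Lemma er_sum1 (R : realType) (n : nat) (q : R) :
  \sum_(E : {set 'I_n * 'I_n}) er_prob q E = 1.
Proof.
have := @er_event R n q finset.set0 finset.set0 (finset.sub0set _) (finset.sub0set _).
rewrite [X in _ = X]big1 => [|e _].
  move=> <-; apply: eq_bigr => E _; by rewrite finset.setI0 eqxx mulr1.
by rewrite finset.in_set0.
Qed.

Lemma er_lower (R : realType) (n : nat) (q : R) (S : {set 'I_n * 'I_n}) t :
  0 <= q <= 1 -> t \in S -> S \subset pairs n ->
  q * (1 - q) ^+ #|S| <=
  \sum_(E : {set 'I_n * 'I_n}) er_prob q E * (if E :&: S == [set t] then 1 else 0).
Proof.
move=> /andP[q0 q1] tS sSp.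
rewrite er_event //; last by rewrite finset.sub1set.
pose F' (e : 'I_n * 'I_n) : R := if e \in S then 1 - q else 1.
have hF : \prod_e F' e = (1 - q) ^+ #|S|.
  by rewrite -big_mkcond /= prodr_const.
have F'0 : 0 <= \prod_(e | e != t) F' e.
  by apply: prodr_ge0 => e _; rewrite /F'; case: ifP => _; rewrite ?subr_ge0.
rewrite (bigD1 t) //= tS inE eqxx.
rewrite (eq_bigr F'); last by move=> e /negbTE et; rewrite /F' inE et.
rewrite -hF (bigD1 t) //= /F' tS -/F'.
rewrite ler_wpM2l // -[X in _ <= X]mul1r ler_wpM2r //.
by rewrite lerBlDr lerDl.
Qed.

Lemma par_proof (D K : nat) (l : 'I_K) : (l.-1 %/ D < K)%N.
Proof. exact: leq_ltn_trans (leq_trans (leq_div _ _) (leq_pred _)) (ltn_ord l). Qed.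

Definition par (D K : nat) (l : 'I_K) : 'I_K := Ordinal (par_proof D l).

Definition Lp (D K : nat) (l : 'I_K) : bool :=
  [&& (0 < l)%N, (l.-1 %% D == 0)%N & (K <= l * D + 1)%N].

Definition Sset (n D K : nat) (s : {ffun 'I_K -> 'I_n}) (l : 'I_K) (v : 'I_n)
  : {set 'I_n * 'I_n} :=
  [set e in pairs n | [|| touches (s l) e, touches v e |
      touches (s (par D l)) e &&
      ((e.1 \notin planted_set s) || (e.2 \notin planted_set s))]].

Definition good (n D K : nat) (E : {set 'I_n * 'I_n}) (s : {ffun 'I_K -> 'I_n})
  (l : 'I_K) (v : 'I_n) : bool :=
  [&& injectiveb s, Lp D l, v \notin planted_set s, E \subset pairs n &
      E :&: Sset D s l v == [set upair (s (par D l)) v]].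

Definition Phi (n K : nat)
  (q : ({set 'I_n * 'I_n} * {ffun 'I_K -> 'I_n}) * ('I_K * 'I_n)) :
  ({set 'I_n * 'I_n} * {ffun 'I_K -> 'I_n}) * ('I_K * 'I_n) :=
  ((tp (tperm (q.1.2 q.2.1) q.2.2) @: q.1.1,
    [ffun a => tperm (q.1.2 q.2.1) q.2.2 (q.1.2 a)]), (q.2.1, q.1.2 q.2.1)).

Lemma tperm_eqE (n : nat) (x y z a : 'I_n) :
  (tperm x y z == a) = (z == tperm x y a).
Proof.
apply/eqP/eqP => [<-|->]; by rewrite tpermK.
Qed.

Lemma planted_set_perm (n K : nat) (s : {ffun 'I_K -> 'I_n}) (x y z : 'I_n) :
  (z \in planted_set [ffun a => tperm x y (s a)]) = (tperm x y z \in planted_set s).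
Proof.
apply/imsetP/imsetP => [[a _ ->]|[a _ e]].
  by exists a => //; rewrite ffunE tpermK.
by exists a => //; rewrite ffunE -e tpermK.
Qed.

Lemma mem_planted (n K : nat) (s : {ffun 'I_K -> 'I_n}) a : s a \in planted_set s.
Proof. by apply/imsetP; exists a. Qed.

Lemma inj_perm (n K : nat) (s : {ffun 'I_K -> 'I_n}) (t : {perm 'I_n}) :
  injective s -> injective [ffun a => t (s a)].
Proof. by move=> si a b; rewrite !ffunE => /perm_inj /si. Qed.

Lemma planted_tp (n D K : nat) (s : {ffun 'I_K -> 'I_n}) (t : {perm 'I_n}) :
  planted_edges D [ffun a => t (s a)] = tp t @: planted_edges D s.
Proof.
rewrite /planted_edges -imset_comp; apply: eq_imset => ab /=.
by rewrite !ffunE tp_upair.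
Qed.

Lemma tree_edge_lt (D K : nat) (a b : 'I_K) : tree_edge D a b -> (b < a)%N.
Proof.
case/andP => a0 /eqP ->.
by apply: leq_ltn_trans (leq_div _ _) _; rewrite prednK.
Qed.

Lemma planted_sub (n D K : nat) (s : {ffun 'I_K -> 'I_n}) :
  injective s -> planted_edges D s \subset pairs n.
Proof.
move=> si; apply/fintype.subsetP => e /imsetP [ab]; rewrite inE => te ->.
apply: upair_pairs; apply/eqP => /si eab.
by move: (tree_edge_lt te); rewrite eab ltnn.
Qed.

Lemma upair_or (n : nat) (P : pred 'I_n) (a b : 'I_n) :
  P (upair a b).1 || P (upair a b).2 = P a || P b.
Proof. by rewrite /upair; case: ifP => //= _; rewrite orbC. Qed.

Lemma par_neq (D K : nat) (l : 'I_K) : (0 < l)%N -> par D l != l.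
Proof.
move=> l0; apply/eqP => /(congr1 val) /= h.
have : (l.-1 %/ D < l)%N by apply: leq_ltn_trans (leq_div _ _) _; rewrite prednK.
by rewrite h ltnn.
Qed.

Lemma tree_edge_par (D K : nat) (l : 'I_K) : (0 < l)%N -> tree_edge D l (par D l).
Proof. by move=> l0; rewrite /tree_edge l0 /=. Qed.

Section GoodFacts.
Variables (n D K : nat) (E : {set 'I_n * 'I_n}) (s : {ffun 'I_K -> 'I_n})
  (l : 'I_K) (v : 'I_n).
Hypothesis G : good D E s l v.

Let x := s l.
Let p := s (par D l).

Lemma gd_inj : injective s.
Proof. by case/and5P: G => /injectiveP. Qed.
Lemma gd_Lp : Lp D l.
Proof. by case/and5P: G. Qed.
Lemma gd_v : v \notin planted_set s.
Proof. by case/and5P: G. Qed.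
Lemma gd_sub : E \subset pairs n.
Proof. by case/and5P: G. Qed.
Lemma gd_eq : E :&: Sset D s l v = [set upair (s (par D l)) v].
Proof. by case/and5P: G => _ _ _ _ /eqP. Qed.
Lemma gd_xv : s l != v.
Proof. by apply: contraNneq gd_v => <-; exact: mem_planted. Qed.
Lemma gd_pv : s (par D l) != v.
Proof. by apply: contraNneq gd_v => <-; exact: mem_planted. Qed.
Lemma gd_px : s (par D l) != s l.
Proof.
apply: contra (@par_neq D K l _) => [/eqP/gd_inj/eqP //|].
by case/and3P: gd_Lp.
Qed.
Lemma gd_pvE : upair (s (par D l)) v \in E.
Proof.
have : upair (s (par D l)) v \in E :&: Sset D s l v by rewrite gd_eq set11.
by rewrite inE => /andP[].
Qed.
Lemma gd_ES e : e \in E -> e \in Sset D s l v -> e = upair (s (par D l)) v.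
Proof.
move=> eE eS; have : e \in E :&: Sset D s l v by rewrite inE eE.
by rewrite gd_eq => /set1P.
Qed.
End GoodFacts.

Lemma touches_tp (n : nat) (x y a : 'I_n) e :
  touches a (tp (tperm x y) e) = touches (tperm x y a) e.
Proof. by rewrite /tp touches_upair /touches !tperm_eqE. Qed.

Lemma good_Phi (n D K : nat) E (s : {ffun 'I_K -> 'I_n}) l v :
  good D E s l v ->
  good D (tp (tperm (s l) v) @: E) [ffun a => tperm (s l) v (s a)] l (s l).
Proof.
move=> G.
have si := gd_inj G; have sE := gd_sub G.
have px := gd_px G; have pv := gd_pv G; have xv := gd_xv G.
have tp_p : tperm (s l) v (s (par D l)) = s (par D l).
  by apply: tpermD; rewrite eq_sym.
apply/and5P; split.
- by apply/injectiveP; apply: inj_perm.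
- exact: gd_Lp G.
- by rewrite planted_set_perm tpermL; exact: gd_v G.
- exact: tp_subset.
apply/eqP/setP => e; rewrite inE mem_tp // finset.in_set1 ffunE tp_p.
have pvS : upair (s (par D l)) v \in Sset D s l v.
  by rewrite inE upair_pairs // !touches_upair eqxx !orbT.
case ep: (e \in pairs n); last first.
  apply/esym/negbTE; apply: contraFN ep => /eqP ->.
  by apply: upair_pairs.
rewrite /=.
have -> : (e \in Sset D [ffun a => tperm (s l) v (s a)] l (s l)) =
          (tp (tperm (s l) v) e \in Sset D s l v).
  rewrite !inE -!in_pairs ep tp_pairs //= !ffunE tpermL tp_p !touches_tp tpermL tpermR tp_p.
  rewrite /tp (upair_or (fun z => z \notin planted_set s)) !planted_set_perm.
  by [].
apply/idP/eqP => [/andP[h1 h2]|->].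
  have := gd_ES G h1 h2 => /(congr1 (tp (tperm (s l) v))).
  by rewrite tpK // tp_upair tp_p tpermR.
by rewrite tp_upair tp_p tpermL (gd_pvE G) pvS.
Qed.

Lemma PhiK (n D K : nat) E (s : {ffun 'I_K -> 'I_n}) l v :
  good D E s l v -> Phi (Phi ((E, s), (l, v))) = ((E, s), (l, v)).
Proof.
move=> G; rewrite /Phi /= ffunE tpermL tpermC tpp; last exact: gd_sub G.
congr ((_, _), _); apply/ffunP => a; by rewrite !ffunE tpermK.
Qed.

Lemma G_Phi (n D K : nat) E (s : {ffun 'I_K -> 'I_n}) l v :
  good D E s l v ->
  (tp (tperm (s l) v) @: E) :|: planted_edges D [ffun a => tperm (s l) v (s a)]
  = E :|: planted_edges D s.
Proof.
move=> G.
have si := gd_inj G; have sE := gd_sub G.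
have px := gd_px G; have pv := gd_pv G; have xv := gd_xv G.
have tp_p : tperm (s l) v (s (par D l)) = s (par D l).
  by apply: tpermD; rewrite eq_sym.
have [l0 _ leaf] := and3P (gd_Lp G).
rewrite planted_tp -imsetU.
set GG := E :|: planted_edges D s.
have GP : GG \subset pairs n by rewrite finset.subUset sE planted_sub.
have closed : forall e, e \in GG -> tp (tperm (s l) v) e \in GG.
  move=> e eG; have ep := fintype.subsetP GP _ eG.
  case tx: (touches (s l) e).
    case eE: (e \in E).
      have : e \in Sset D s l v by rewrite inE ep tx.
      move/(gd_ES G eE) => ee; move: tx; rewrite ee touches_upair.
      by rewrite (negbTE px) eq_sym (negbTE xv).
    move: eG; rewrite inE eE /= => /imsetP [[a b]]; rewrite inE /= => tab ee.
    move: tx; rewrite ee touches_upair => /orP [/eqP /si al | /eqP /si bl].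
      subst a; have bpar : b = par D l.
        by apply: val_inj; case/andP: tab => _ /eqP.
      subst b; rewrite tp_upair tpermL tp_p upairC inE.
      by rewrite (gd_pvE G).
    subst b; exfalso; case/andP: tab => a0 /eqP ea.
    have : (l * D <= a.-1)%N by rewrite ea leq_trunc_div.
    rewrite -ltnS prednK // => h.
    move: leaf; rewrite addn1 => leaf.
    by have := leq_trans leaf h; rewrite leqNgt ltn_ord.
  case tv: (touches v e).
    case eE: (e \in E); last first.
      move: eG; rewrite inE eE /= => /imsetP [[a b]]; rewrite inE /= => tab ee.
      move: tv; rewrite ee touches_upair => /orP [] /eqP ev;
        by move: (gd_v G); rewrite -ev mem_planted.
    have : e \in Sset D s l v by rewrite inE ep tv orbT.
    move/(gd_ES G eE) => ->.
    rewrite tp_upair tp_p tpermR inE; apply/orP; right.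
    apply/imsetP; exists (l, par D l); first by rewrite inE /= tree_edge_par.
    by rewrite /= upairC.
  have ne1 : s l != e.1 by apply/eqP => h; move: tx; rewrite /touches -h eqxx.
  have ne2 : s l != e.2 by apply/eqP => h; move: tx; rewrite /touches -h eqxx orbT.
  have ne3 : v != e.1 by apply/eqP => h; move: tv; rewrite /touches -h eqxx.
  have ne4 : v != e.2 by apply/eqP => h; move: tv; rewrite /touches -h eqxx orbT.
  by rewrite /tp !tpermD // upairE.
apply/eqP; rewrite eqEcard card_in_imset; last first.
  by move=> e1 e2 /(fintype.subsetP GP) h1 /(fintype.subsetP GP) h2; apply: tp_inj.
rewrite leqnn andbT; apply/fintype.subsetP => _ /imsetP[e eG ->]; exact: closed.
Qed.

Definition QT (n K : nat) :=
  (({set 'I_n * 'I_n} * {ffun 'I_K -> 'I_n}) * ('I_K * 'I_n))%type.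

Definition goodq (n D K : nat) (qq : QT n K) : bool :=
  good D qq.1.1 qq.1.2 qq.2.1 qq.2.2.

Definition Gq (n D K : nat) (qq : QT n K) := qq.1.1 :|: planted_edges D qq.1.2.

Definition term (R : realType) (n D K : nat) (f : {set 'I_n * 'I_n} -> {set 'I_n})
  (qq : QT n K) : R :=
  (if qq.1.2 qq.2.1 \in f (Gq D qq) then 0 else 1) +
  (if qq.2.2 \in f (Gq D qq) then 1 else 0).

Lemma goodq_Phi (n D K : nat) (qq : QT n K) : goodq D qq -> goodq D (Phi qq).
Proof. by case: qq => [[E s] [l v]] /good_Phi. Qed.

Lemma goodq_PhiK (n D K : nat) (qq : QT n K) : goodq D qq -> Phi (Phi qq) = qq.
Proof. by case: qq => [[E s] [l v]] /PhiK. Qed.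

Lemma invol_sum (R : realType) (n D K : nat) (q : R)
  (f : {set 'I_n * 'I_n} -> {set 'I_n}) :
  \sum_(qq : QT n K | goodq D qq) er_prob q qq.1.1 * term R D f qq =
  \sum_(qq : QT n K | goodq D qq) er_prob q qq.1.1.
Proof.
set A := LHS.
have hA : A = \sum_(qq : QT n K | goodq D qq) er_prob q qq.1.1 * term R D f (Phi qq).
  rewrite /A (reindex_onto (@Phi n K) (@Phi n K)); last by move=> i /goodq_PhiK.
  apply: eq_big => [j|j gj'].
    apply/andP/idP => [[g1 /eqP e1]|gj].
      by rewrite -e1; apply: goodq_Phi.
    by rewrite goodq_Phi // (goodq_PhiK gj) eqxx.
  have : goodq D j by case/andP: gj' => g1 /eqP e1; rewrite -e1; apply: goodq_Phi.
  case: j {gj'} => [[E s] [l v]] /= gj.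
  by rewrite er_tp //; move: gj; rewrite /goodq /= => /and5P[].
have h2 : A + A = \sum_(qq : QT n K | goodq D qq) er_prob q qq.1.1 * 2.
  rewrite {1}hA /A -big_split /=; apply: eq_bigr => [[[E s] [l v]]] /= gj.
  rewrite -mulrDr; congr (_ * _).
  rewrite /term /Gq /= G_Phi // !ffunE tpermL.
  by case: (s l \in _); case: (v \in _); rewrite ?addr0 ?add0r.
apply: (@mulIf _ 2); first by rewrite pnatr_eq0.
by rewrite [RHS]big_distrl /= -h2 mulr_natr mulr2n.
Qed.

Lemma card_sumR (R : realType) (T : finType) (A : {set T}) :
  (#|A|%:R : R) = \sum_(t : T) (if t \in A then 1 else 0).
Proof. by rewrite -big_mkcond /= sumr_const. Qed.

Lemma good_uniq_v (n D K : nat) E (s : {ffun 'I_K -> 'I_n}) l v1 v2 :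
  good D E s l v1 -> good D E s l v2 -> v1 = v2.
Proof.
move=> g1 g2.
have h : upair (s (par D l)) v2 \in Sset D s l v1.
  rewrite inE upair_pairs ?(gd_pv g2) //= !touches_upair eqxx /=.
  by rewrite (upair_or (fun z => z \notin planted_set s)) (gd_v g2) !orbT.
by have := gd_ES g1 (gd_pvE g2) h => /upair_inj.
Qed.

Lemma Lp_par (D K : nat) (l : 'I_K) : Lp D l -> l = ((par D l) * D).+1 :> nat.
Proof.
case/and3P => l0 /eqP m0 _ /=.
have := divn_eq l.-1 D; rewrite m0 addn0 => <-.
by rewrite prednK.
Qed.

Lemma good_uniq_l (n D K : nat) E (s : {ffun 'I_K -> 'I_n}) l1 l2 v :
  good D E s l1 v -> good D E s l2 v -> l1 = l2.
Proof.
move=> g1 g2.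
have h : upair (s (par D l2)) v \in Sset D s l1 v.
  by rewrite inE upair_pairs ?(gd_pv g2) //= !touches_upair eqxx /= !orbT.
have := gd_ES g1 (gd_pvE g2) h; rewrite upairC [X in _ = X]upairC.
move/upair_inj/(gd_inj g1) => e.
apply: ord_inj; rewrite (Lp_par (gd_Lp g1)) (Lp_par (gd_Lp g2)).
by rewrite e.
Qed.

Lemma sum_uniq_le1 (R : realType) (T : finType) (P : pred T) (c : R) :
  0 <= c -> (forall x y, P x -> P y -> x = y) ->
  \sum_(t : T) (if P t then c else 0) <= c.
Proof.
move=> c0 uP.
case: (pickP P) => [x Px|P0].
  rewrite (bigD1 x) //= Px big1 ?addr0 // => y yx.
  by case Py: (P y) => //; move: yx; rewrite (uP _ _ Py Px) eqxx.
by rewrite big1 // => t _; rewrite P0.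
Qed.

Lemma step1 (R : realType) (n D K : nat) E (s : {ffun 'I_K -> 'I_n})
  (F : {set 'I_n}) :
  injective s -> #|F| = K ->
  2 * (#|F :&: planted_set s|%:R : R) +
  \sum_(l : 'I_K) \sum_(v : 'I_n) (if good D E s l v then
     (if s l \in F then 0 else 1) + (if v \in F then 1 else 0) else 0)
  <= 2 * K%:R.
Proof.
move=> si cF.
set m := (#|F :&: planted_set s|%:R : R).
have eq1 : \sum_(l : 'I_K) (if s l \in F then 0 else 1) + m = (K%:R : R).
  have -> : m = \sum_(l : 'I_K) (if s l \in F then 1 else 0).
    rewrite /m (_ : F :&: planted_set s = s @: [set l | s l \in F]).
      rewrite card_imset //; first by rewrite card_sumR; apply: eq_bigr => l _; rewrite inE.
    apply/setP => z; apply/setIP/imsetP => [[zF /imsetP[l _ zl]]|[l]].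
      by exists l => //; rewrite inE -zl.
    by rewrite inE => lF ->; split => //; apply: mem_planted.
  rewrite -big_split /=.
  rewrite (eq_bigr (fun _ => 1)); first by rewrite sumr_const card_ord.
  by move=> l _; case: ifP; rewrite ?addr0 ?add0r.
have eq2 : \sum_(v : 'I_n) (if v \in F then (if v \in planted_set s then 0 else 1) else 0)
           + m = (K%:R : R).
  rewrite -[X in _ = X%:R]cF card_sumR [m]card_sumR -big_split /=; apply: eq_bigr => v _.
  rewrite inE; case: (v \in F); case: (v \in planted_set s); by rewrite ?addr0 ?add0r.
have le1 : \sum_(l : 'I_K) \sum_(v : 'I_n)
    (if good D E s l v then (if s l \in F then 0 else 1) else 0)
    <= \sum_(l : 'I_K) (if s l \in F then 0 else 1 : R).
  apply: ler_sum => l _; apply: sum_uniq_le1; first by case: ifP.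
  by move=> x y; apply: good_uniq_v.
have le2 : \sum_(l : 'I_K) \sum_(v : 'I_n)
    (if good D E s l v then (if v \in F then 1 else 0) else 0)
    <= \sum_(v : 'I_n) (if v \in F then (if v \in planted_set s then 0 else 1) else 0 : R).
  rewrite exchange_big /=; apply: ler_sum => v _.
  case vF: (v \in F); last first.
    by rewrite big1 // => l _; case: ifP.
  case vK: (v \in planted_set s).
    rewrite big1 // => l _; case: ifP => // g.
    by move: (gd_v g); rewrite vK.
  apply: sum_uniq_le1 => // x y; exact: good_uniq_l.
have -> : \sum_(l : 'I_K) \sum_(v : 'I_n) (if good D E s l v then
     (if s l \in F then 0 else 1) + (if v \in F then 1 else 0) else 0 : R) =
   \sum_(l : 'I_K) \sum_(v : 'I_n)
    (if good D E s l v then (if s l \in F then 0 else 1) else 0) +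
   \sum_(l : 'I_K) \sum_(v : 'I_n)
    (if good D E s l v then (if v \in F then 1 else 0) else 0).
  rewrite -big_split /=; apply: eq_bigr => l _; rewrite -big_split /=; apply: eq_bigr => v _.
  by case: ifP; rewrite ?addr0.
have := lerD le1 le2. move: eq1 eq2. lra.
Qed.

Lemma card_touches (n : nat) (a : 'I_n) :
  (#|[set e : 'I_n * 'I_n | touches a e]| <= 2 * n)%N.
Proof.
have -> : [set e : 'I_n * 'I_n | touches a e] =
   [set (a, y) | y in 'I_n] :|: [set (y, a) | y in 'I_n].
  apply/setP => [[e1 e2]]; rewrite !inE /touches /=.
  apply/orP/orP => [[/eqP->|/eqP->]|[/imsetP[y _ [-> _]]|/imsetP[y _ [_ ->]]]].
  - by left; apply/imsetP; exists e2.
  - by right; apply/imsetP; exists e1.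
  - by left.
  - by right.
apply: leq_trans (leq_card_setU _ _) _.
rewrite mul2n -addnn; apply: leq_add; apply: leq_trans (leq_imset_card _ _) _;
  by rewrite card_ord.
Qed.

Lemma card_Sset (n D K : nat) (s : {ffun 'I_K -> 'I_n}) l v :
  (#|Sset D s l v| <= 6 * n)%N.
Proof.
apply: leq_trans (subset_leq_card (B := [set e | touches (s l) e] :|:
   [set e | touches v e] :|: [set e | touches (s (par D l)) e]) _) _.
  apply/fintype.subsetP => e; rewrite !inE => /andP[_ /or3P[->|->|/andP[-> _]]];
    by rewrite ?orbT.
apply: leq_trans (leq_card_setU _ _) _.
apply: leq_trans (leq_add (leq_card_setU _ _) (leqnn _)) _.
have h := card_touches; rewrite (_ : 6 * n = 2 * n + 2 * n + 2 * n)%N; last by rewrite -!mulnDl.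
by apply: leq_add; [apply: leq_add|]; apply: h.
Qed.

Lemma lower_one (R : realType) (n D K : nat) (q : R) (s : {ffun 'I_K -> 'I_n}) l v :
  0 <= q <= 1 -> injective s -> Lp D l -> v \notin planted_set s ->
  q * (1 - q) ^+ (6 * n) <=
  \sum_(E : {set 'I_n * 'I_n}) (if good D E s l v then er_prob q E else 0).
Proof.
move=> /andP[q0 q1] si lL vK.
have pv : s (par D l) != v.
  by apply: contraNneq vK => <-; exact: mem_planted.
have tS : upair (s (par D l)) v \in Sset D s l v.
  by rewrite inE upair_pairs // !touches_upair eqxx /= !orbT.
have SP : Sset D s l v \subset pairs n.
  by apply/fintype.subsetP => e; rewrite inE => /andP[].
apply: (@le_trans _ _ (q * (1 - q) ^+ #|Sset D s l v|)).
  by rewrite ler_wpM2l // ler_wiXn2l ?subr_ge0 ?lerBlDr ?lerDl // card_Sset.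
apply: le_trans (er_lower (q := q) _ tS SP) _; first by rewrite q0 q1.
rewrite le_eqVlt; apply/orP; left; apply/eqP; apply: eq_bigr => E _.
rewrite /good (introT (injectiveP _) si) lL vK /=.
case sE: (E \subset pairs n) => /=.
  by case: ifP; rewrite ?mulr1 ?mulr0.
by rewrite /er_prob sE mul0r.
Qed.

Definition Sg (D h : nat) : nat := (\sum_(i < h.+1) D ^ i)%N.

Lemma Ksize_Sg (D h : nat) : (1 < D)%N -> Ksize D h = Sg D h.
Proof.
move=> D1; rewrite /Ksize /Sg subn1 predn_exp subn1 mulKn //.
by rewrite -subn1 subn_gt0.
Qed.

Lemma Sg_lt (D h : nat) : (1 < D)%N -> (Sg D h < D ^ h.+1)%N.
Proof.
move=> D1; have := predn_exp D h.+1; rewrite -/(Sg D h) => e.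
have h1 : (Sg D h <= (D ^ h.+1).-1)%N.
  by rewrite e leq_pmull // -subn1 subn_gt0.
by apply: leq_ltn_trans h1 _; rewrite prednK // expn_gt0 (ltnW D1).
Qed.

Lemma SgS (D h : nat) : Sg D h.+1 = (1 + D * Sg D h)%N.
Proof.
rewrite /Sg big_ord_recl expn0; congr (_ + _)%N.
rewrite big_distrr /=; apply: eq_bigr => i _.
by rewrite /bump /= add1n expnS.
Qed.

Lemma SgSr (D h : nat) : Sg D h.+1 = (Sg D h + D ^ h.+1)%N.
Proof. by rewrite /Sg big_ord_recr. Qed.

Lemma Sg_mod (D h : nat) : exists m, Sg D h = (1 + D * m)%N.
Proof.
case: h => [|h]; first by exists 0%N; rewrite /Sg big_ord1 muln0.
by exists (Sg D h); rewrite SgS.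
Qed.

Lemma count_Lp (D h0 K : nat) : (1 < D)%N -> K = Ksize D h0.+1 ->
  (K <= 2 * D * #|[set l : 'I_K | Lp D l]|)%N.
Proof.
move=> D1 eK; rewrite Ksize_Sg // in eK.
have D0 : (0 < D)%N by apply: ltnW.
have [m em] := Sg_mod D h0.
have Sg0 : (0 < Sg D h0)%N by rewrite em add1n.
have K0 : (0 < K)%N by rewrite eK SgS.
pose l0 : 'I_K := Ordinal K0.
pose g (j : 'I_(D ^ h0)) : 'I_K := insubd l0 (Sg D h0 + D * j)%N.
have gP (j : 'I_(D ^ h0)) : (Sg D h0 + D * j < K)%N.
  rewrite eK SgSr ltn_add2l expnS ltn_pmul2l //.
have gv (j : 'I_(D ^ h0)) : val (g j) = (Sg D h0 + D * j)%N.
  by rewrite /g insubdK //; exact: gP.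
have ginj : injective g.
  move=> j1 j2 /(congr1 val); rewrite !gv => /eqP.
  rewrite eqn_add2l eqn_pmul2l // => /eqP; exact: ord_inj.
have sub : g @: [set: 'I_(D ^ h0)] \subset [set l : 'I_K | Lp D l].
  apply/fintype.subsetP => _ /imsetP[j _ ->]; rewrite inE /Lp gv.
  apply/and3P; split.
  - by apply: leq_trans Sg0 (leq_addr _ _).
  - by rewrite em -addnA add1n /= -mulnDr modnMr.
  - rewrite eK SgS; nia.
have := subset_leq_card sub; rewrite card_imset // cardsT card_ord => hc.
apply: leq_trans (_ : 2 * D * D ^ h0 <= _)%N; last by rewrite leq_mul2l hc orbT.
rewrite eK SgSr expnS -mulnA mul2n -addnn leq_add2r.
by apply: ltnW; rewrite -expnS; apply: Sg_lt.
Qed.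

Lemma expR_bound (R : realType) (n : nat) (lam : R) :
  (0 < n)%N -> 0 <= lam -> 2 * lam <= n%:R ->
  expR (- (12 * lam)) <= (1 - lam / n%:R) ^+ (6 * n).
Proof.
move=> n0 l0 ln.
have nR : (0 : R) < n%:R by rewrite ltr0n.
set q := lam / n%:R.
have q0 : 0 <= q by rewrite /q divr_ge0 // ltW.
have q2 : q <= 1 / 2.
  by rewrite /q ler_pdivrMr //; lra.
have hq : expR (- (2 * q)) <= 1 - q.
  rewrite expRN; have hE := expR_ge1Dx (2 * q).
  have E0 := expR_gt0 (2 * q).
  rewrite -(@ler_pM2r _ (expR (2 * q))) // mulVf ?gt_eqF //.
  nra.
have -> : - (12 * lam) = - (2 * q) * (6 * n)%:R.
  by rewrite /q natrM; field; rewrite gt_eqF.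
rewrite expRM_natr; apply: lerXn2r => //.
  by rewrite qualifE /= expR_ge0.
by rewrite qualifE /= subr_ge0; lra.
Qed.

Lemma quad_sum (R : realType) (n K : nat) (F : QT n K -> R) :
  \sum_(qq : QT n K) F qq =
  \sum_(E : {set 'I_n * 'I_n}) \sum_(s : {ffun 'I_K -> 'I_n}) \sum_(l : 'I_K)
    \sum_(v : 'I_n) F ((E, s), (l, v)).
Proof.
rewrite [RHS]pair_big /=.
under eq_bigr do rewrite pair_big /=.
rewrite pair_big /=; apply: eq_bigr => [[[E s] [l v]]] _ //.
Qed.

Lemma er_ge0 (R : realType) (n : nat) (q : R) (E : {set 'I_n * 'I_n}) :
  0 <= q <= 1 -> 0 <= er_prob q E.
Proof.
move=> /andP[q0 q1]; rewrite /er_prob; case: ifP => // _.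
by apply: prodr_ge0 => e _; case: ifP; rewrite ?subr_ge0.
Qed.

Lemma sum_in_const (R : realType) (T : finType) (P : pred T) (b : R) :
  \sum_(t : T) (if P t then b else 0) = #|[set t | P t]|%:R * b.
Proof.
by rewrite -big_mkcond /= sumr_const mulr_natl; congr (_ *+ _); apply: eq_card => t; rewrite inE.
Qed.

Lemma main_bound (R : realType) (n D h0 K : nat) (lam : R)
  (f : {set 'I_n * 'I_n} -> {set 'I_n}) :
  (1 < D)%N -> K = Ksize D h0.+1 -> (0 < n)%N -> (2 * K <= n)%N -> 0 < lam ->
  2 * lam <= n%:R -> (forall E, #|f E| = K) ->
  overlap D K lam f <= (1 - lam * expR (- (12 * lam)) / (8 * D%:R)) * K%:R.
Proof.
move=> D1 eK n0 Kn2 l0 ln cf.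
have nR : (0 : R) < n%:R by rewrite ltr0n.
set q := lam / n%:R.
have q0 : 0 <= q by rewrite /q divr_ge0 // ltW.
have q1 : q <= 1 by rewrite /q ler_pdivrMr // mul1r; lra.
have q01 : 0 <= q <= 1 by rewrite q0 q1.
have Kn : (K <= n)%N by apply: leq_trans Kn2; rewrite leq_pmull.
pose s0 : {ffun 'I_K -> 'I_n} := [ffun l => widen_ord Kn l].
have s0i : s0 \in injs n K.
  rewrite inE; apply/injectiveP => a b; rewrite !ffunE => /(congr1 val) /= /ord_inj //.
set c := (#|injs n K|%:R : R).
have c0 : 0 < c by rewrite ltr0n; apply/card_gt0P; exists s0.
pose C E (s : {ffun 'I_K -> 'I_n}) := \sum_(l : 'I_K) \sum_(v : 'I_n)
  (if good D E s l v then
     (if s l \in f (E :|: planted_edges D s) then 0 else 1) +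
     (if v \in f (E :|: planted_edges D s) then 1 else 0) else 0 : R).
have C0 E s : 0 <= C E s.
  by apply: sumr_ge0 => l _; apply: sumr_ge0 => v _; do 3 case: ifP => //.
have stepA : overlap D K lam f <=
    \sum_(E : {set 'I_n * 'I_n}) \sum_(s in injs n K)
       (K%:R * (er_prob q E / c) - (er_prob q E * C E s) / (2 * c)).
  apply: ler_sum => E _; apply: ler_sum => s sI.
  have si : injective s by move: sI; rewrite inE => /injectiveP.
  have := @step1 R n D K E s (f (E :|: planted_edges D s)) si (cf _).
  rewrite -/(C E s) => h1.
  have e0 := er_ge0 E q01.
  have -> : K%:R * (er_prob q E / c) - er_prob q E * C E s / (2 * c) =
            (er_prob q E / c) * (K%:R - C E s / 2).
    by field; rewrite gt_eqF.
  apply: ler_wpM2l; first by rewrite divr_ge0 // ltW.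
  lra.
have X1 : \sum_(E : {set 'I_n * 'I_n}) \sum_(s in injs n K) (er_prob q E / c) = 1.
  rewrite -(er_sum1 n q); apply: eq_bigr => E _.
  by rewrite sumr_const -mulr_natr mulrAC -mulrA divff ?mulr1 // gt_eqF.
pose Gs E (s : {ffun 'I_K -> 'I_n}) l v := if good D E s l v then er_prob q E else 0.
have Y1 : \sum_(E : {set 'I_n * 'I_n}) \sum_(s in injs n K) er_prob q E * C E s =
   \sum_(E : {set 'I_n * 'I_n}) \sum_(s : {ffun 'I_K -> 'I_n}) \sum_(l : 'I_K)
     \sum_(v : 'I_n) Gs E s l v.
  transitivity (\sum_(qq : QT n K | goodq D qq) er_prob q qq.1.1 * term R D f qq).
    rewrite [RHS]big_mkcond [RHS]quad_sum; apply: eq_bigr => E _.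
    rewrite [LHS]big_mkcond /=; apply: eq_bigr => s _.
    case: ifP => sI.
      rewrite /C mulr_sumr; apply: eq_bigr => l _; rewrite mulr_sumr; apply: eq_bigr => v _.
      by rewrite /goodq /=; case: ifP; rewrite ?mulr0.
    symmetry; apply: big1 => l _; apply: big1 => v _; rewrite /goodq /=.
    case: ifP => // /and5P[si _ _ _ _]; by move: sI; rewrite inE si.
  rewrite invol_sum [LHS]big_mkcond [LHS]quad_sum; apply: eq_bigr => E _.
  by apply: eq_bigr => s _; apply: eq_bigr => l _; apply: eq_bigr => v _.
set L := (#|[set l : 'I_K | Lp D l]|%:R : R).
set beta := q * (1 - q) ^+ (6 * n).
have Y2 : c * (L * ((n - K)%:R * beta)) <=
   \sum_(E : {set 'I_n * 'I_n}) \sum_(s : {ffun 'I_K -> 'I_n}) \sum_(l : 'I_K)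
     \sum_(v : 'I_n) Gs E s l v.
  rewrite exchange_big /=.
  under eq_bigr do rewrite exchange_big /=.
  under eq_bigr do under eq_bigr do rewrite exchange_big /=.
  apply: (@le_trans _ _ (\sum_(s in injs n K) \sum_(l : 'I_K) \sum_(v : 'I_n)
             \sum_(E : {set 'I_n * 'I_n}) Gs E s l v)); last first.
    rewrite [X in X <= _]big_mkcond /=; apply: ler_sum => s _; case: ifP => _; first exact: lexx.
    apply: sumr_ge0 => l _; apply: sumr_ge0 => v _; apply: sumr_ge0 => E _.
    by rewrite /Gs; case: ifP => // _; apply: er_ge0.
  rewrite /c mulr_natl -sumr_const; apply: ler_sum => s sI.
  have si : injective s by move: sI; rewrite inE => /injectiveP.
  have cKs : #|planted_set s| = K by rewrite card_imset // cardsT card_ord.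
  apply: (@le_trans _ _ (\sum_(l : 'I_K) \sum_(v : 'I_n)
      (if Lp D l && (v \notin planted_set s) then beta else 0))).
    rewrite [X in _ <= X](_ : _ = \sum_(l : 'I_K) (if Lp D l then (n - K)%:R * beta else 0)).
      by rewrite sum_in_const.
    apply: eq_bigr => l _; case: ifP => lL /=; last by rewrite big1.
    rewrite sum_in_const; congr (_ * _); congr (_%:R).
    have hC := cardsC (planted_set s); rewrite cKs card_ord in hC.
    have -> : #|[set t | t \notin planted_set s]| = #|~: planted_set s|.
      by apply: eq_card => v; rewrite !inE.
    lia.
  apply: ler_sum => l _; apply: ler_sum => v _.
  case: ifP => [/andP[lL vK]|_].
    by apply: lower_one.
  by apply: sumr_ge0 => E _; rewrite /Gs; case: ifP => // _; apply: er_ge0.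
have ov : overlap D K lam f <= K%:R - c * (L * ((n - K)%:R * beta)) / (2 * c).
  apply: le_trans stepA _.
  have -> : \sum_(E : {set 'I_n * 'I_n}) \sum_(s in injs n K)
       (K%:R * (er_prob q E / c) - (er_prob q E * C E s) / (2 * c)) =
     K%:R * (\sum_(E : {set 'I_n * 'I_n}) \sum_(s in injs n K) (er_prob q E / c)) -
     (\sum_(E : {set 'I_n * 'I_n}) \sum_(s in injs n K) er_prob q E * C E s) / (2 * c).
    rewrite mulr_sumr mulr_suml -sumrB; apply: eq_bigr => E _.
    by rewrite mulr_sumr mulr_suml -sumrB.
  rewrite X1 mulr1 lerD2l lerN2; apply: ler_wpM2r; first by rewrite invr_ge0 mulr_ge0 // ltW.
  by rewrite Y1.
have d0 : (0 : R) < D%:R by rewrite ltr0n; apply: ltnW.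
have hL : (K%:R : R) <= 2 * D%:R * L.
  by rewrite /L -natrM -natrM ler_nat; apply: count_Lp eK.
have hN : (n%:R : R) <= 2 * (n - K)%:R.
  have : ((2 * K)%:R <= (n%:R : R)) by rewrite ler_nat.
  by rewrite natrM natrB //; lra.
set e := expR (- (12 * lam)).
have e0 : 0 <= e by apply: expR_ge0.
have hb : q * e <= beta by apply: ler_wpM2l => //; apply: expR_bound => //; apply: ltW.
have lamE : lam = q * n%:R by rewrite /q divfK // gt_eqF.
have L0 : 0 <= L by rewrite /L ler0n.
have NK0 : (0 : R) <= (n - K)%:R by rewrite ler0n.
set Z := L * ((n - K)%:R * beta).
have key : K%:R * (lam * e) <= 4 * D%:R * Z.
  have h1 : K%:R * (lam * e) <= (2 * D%:R * L) * (lam * e).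
    by apply: ler_wpM2r => //; rewrite mulr_ge0 // ltW.
  have h2 : lam * e <= 2 * (n - K)%:R * (q * e).
    have qe0 : 0 <= q * e by rewrite mulr_ge0.
    have hh : (0 : R) <= 2 * (n - K)%:R - n%:R by rewrite subr_ge0 hN.
    have := mulr_ge0 qe0 hh; rewrite lamE; nra.
  have h3 : (n - K)%:R * (q * e) <= (n - K)%:R * beta by apply: ler_wpM2l.
  apply: le_trans h1 _; rewrite /Z.
  have h4 : 2 * D%:R * L * (lam * e) <= 2 * D%:R * L * (2 * (n - K)%:R * (q * e)).
    by apply: ler_wpM2l => //; rewrite mulr_ge0 // mulr_ge0 // ltW.
  apply: le_trans h4 _.
  have h5 : 0 <= 4 * D%:R * L by rewrite !mulr_ge0 // ltW.
  rewrite (_ : 2 * D%:R * L * (2 * (n - K)%:R * (q * e)) =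
     4 * D%:R * L * ((n - K)%:R * (q * e))); last by ring.
  by rewrite [X in _ <= X]mulrA; exact: (ler_wpM2l h5 h3).
apply: le_trans ov _.
have -> : c * Z / (2 * c) = Z / 2 by field; rewrite gt_eqF.
have -> : (1 - lam * e / (8 * D%:R)) * K%:R = K%:R - (K%:R * (lam * e)) / (8 * D%:R).
  by field; rewrite gt_eqF.
rewrite lerD2l lerN2 ler_pdivrMr ?mulr_gt0 //.
have -> : Z / 2 * (8 * D%:R) = 4 * D%:R * Z by field.
exact: key.
Qed.

Local Open Scope classical_set_scope.

Theorem theorem11 (R : realType) (D : nat) (lam : R) (h : nat -> nat) :
  (2 <= D)%N -> 0 < lam ->
  (exists N0 : nat, forall n : nat, (N0 <= n)%N ->
     exists h' : nat, [/\ (0 < h')%N, (h' <= h n)%N & ptree lam D h' < n%:R^-1]) ->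
  (((Ksize D (h n))%:R / n%:R : R) @[n --> \oo] --> 0) ->
  exists delta : R, 0 < delta /\
    exists N : nat, forall n : nat, (N <= n)%N ->
      forall f : {set 'I_n * 'I_n} -> {set 'I_n},
        (forall E, #|f E| = Ksize D (h n)) ->
        overlap D (Ksize D (h n)) lam f <= (1 - delta) * (Ksize D (h n))%:R.
Proof.
move=> D2 l0 [N0 hN0] hK.
exists (lam * expR (- (12 * lam)) / (8 * D%:R)); split.
  by rewrite divr_gt0 ?mulr_gt0 ?expR_gt0 // ltr0n; apply: ltnW.
have /cvgrPdist_le /(_ (1 / 2)) : ((Ksize D (h n))%:R / n%:R : R) @[n --> \oo] --> 0 by [].
move=> /(_ ltac:(lra)) [N1 _ hN1].
exists (maxn (maxn N0 N1) (maxn 1 (Num.trunc (2 * lam)).+1)) => n.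
rewrite !geq_max => /andP[/andP[n0 n1] /andP[n2 n3]] f cf.
have [h' [h'0 h'n _]] := hN0 n n0.
have hn : h n = (h n).-1.+1 by rewrite prednK //; apply: leq_trans h'n.
have nR : (0 : R) < n%:R by rewrite ltr0n.
have := hN1 n n1; rewrite /= sub0r normrN ger0_norm ?divr_ge0 // => hk.
have K2 : (2 * Ksize D (h n) <= n)%N.
  rewrite -(ler_nat R) natrM.
  by rewrite ler_pdivrMr // in hk; lra.
apply: (main_bound (h0 := (h n).-1)) => //.
- by rewrite -hn.
- have := truncnS_gt (2 * lam); move: n3; rewrite -(ler_nat R) => n3 h2; lra.
Qed.
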